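(* Let $G$ be a group and $\varphi\colon A\to B$ an isomorphism between subgroups of $G$. Let $Y$ be a group, $y\in Y$, and $\alpha\colon (G,\varphi)\to (Y,c_y)$ an embedding of HNN pairs. (1) If $Y$ is a finite group of $p$-power order ($p$ a prime), then the order of the restriction of $\varphi$ to $H(G,\varphi)$ is a power of $p$. (2) For $a\in A$ and $b\in B$, $\alpha$ is an embedding of HNN pairs $(G,c_b\circ\varphi\circ c_a)\to (Y,c_{\alpha(a)y\alpha(b)})$.
   Context: An HNN pair $(G,\varphi)$ is a group $G$ with an isomorphism $\varphi\colon A\to B$ between subgroups. For $g$ in a group, $c_g(x)=g^{-1}xg$; $(Y,c_y)$ is the HNN pair with $c_y\colon Y\to Y$. For $a\in A$, $b\in B$, $c_b\circ\varphi\circ c_a$ is an isomorphism $A\to B$. A morphism of HNN pairs $(G,\varphi\colon A\to B)\to(G',\varphi'\colon A'\to B')$ is a group homomorphism $\alpha\colon G\to G'$ with $\alpha(A)\subseteq A'$, $\alpha(B)\subseteq B'$ and $\varphi'\circ\alpha|_A=\alpha|_B\circ\varphi$; it is an embedding if $\alpha$ is injective. The core $H(G,\varphi)$ is $\bigcap_k H_k$ where $H_0=A\cap B$ and $H_{k+1}=\varphi^{-1}(H_k)\cap H_k\cap\varphi(H_k)$; $\varphi$ restricts to an automorphism of $H(G,\varphi)$. *)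

(* Defs.v *)
From HB Require Import structures.
From mathcomp Require Import all_boot.
Set Implicit Arguments. Unset Strict Implicit. Unset Printing Implicit Defensive.
Local Open Scope group_scope.

Definition is_subgroup (G : groupType) (S : G -> Prop) : Prop :=
  S 1 /\ (forall x y, S x -> S y -> S (x * y)) /\ (forall x, S x -> S x^-1).

Definition cg (G : groupType) (g : G) : G -> G := fun x => g^-1 * x * g.

(* phi (a function on G, only its restriction to A matters) is a group
   isomorphism from A onto B. *)
Definition is_iso_on (G : groupType) (A B : G -> Prop) (phi : G -> G) : Prop :=
  (forall x, A x -> B (phi x)) /\
  (forall x y, A x -> A y -> phi (x * y) = phi x * phi y) /\
  (forall x y, A x -> A y -> phi x = phi y -> x = y) /\
  (forall z, B z -> exists x, A x /\ phi x = z).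

Definition HNN_pair (G : groupType) (A B : G -> Prop) (phi : G -> G) : Prop :=
  is_subgroup A /\ is_subgroup B /\ is_iso_on A B phi.

Definition HNN_morphism (G G' : groupType) (A B : G -> Prop) (phi : G -> G)
    (A' B' : G' -> Prop) (phi' : G' -> G') (alpha : G -> G') : Prop :=
  (forall x y, alpha (x * y) = alpha x * alpha y) /\
  (forall x, A x -> A' (alpha x)) /\
  (forall x, B x -> B' (alpha x)) /\
  (forall x, A x -> phi' (alpha x) = alpha (phi x)).

Definition HNN_embedding (G G' : groupType) (A B : G -> Prop) (phi : G -> G)
    (A' B' : G' -> Prop) (phi' : G' -> G') (alpha : G -> G') : Prop :=
  HNN_morphism A B phi A' B' phi' alpha /\ injective alpha.

(* H_0 = A ∩ B, H_{k+1} = phi^{-1}(H_k) ∩ H_k ∩ phi(H_k) *)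
Fixpoint Hk (G : groupType) (A B : G -> Prop) (phi : G -> G) (k : nat) : G -> Prop :=
  match k with
  | 0 => fun x => A x /\ B x
  | k'.+1 => fun x =>
      (A x /\ Hk A B phi k' (phi x)) /\ Hk A B phi k' x /\
      (exists z, Hk A B phi k' z /\ phi z = x)
  end.

Definition HNN_core (G : groupType) (A B : G -> Prop) (phi : G -> G) : G -> Prop :=
  fun x => forall k, Hk A B phi k x.

Definition order_on (G : groupType) (P : G -> Prop) (f : G -> G) (n : nat) : Prop :=
  (0 < n)%N /\ (forall x, P x -> iter n f x = x) /\
  (forall m, (0 < m < n)%N -> exists x, P x /\ iter m f x <> x).

Definition finite_ppower_order (Y : groupType) (p : nat) : Prop :=
  exists s : seq Y, uniq s /\ (forall x, x \in s) /\ exists k, size s = (p ^ k)%N.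

(* Main.v *)
From HB Require Import structures.
From mathcomp Require Import all_boot all_fingroup all_solvable.
Local Open Scope group_scope.

Section Fin.
Variables (Y : groupType) (s : seq Y).
Hypotheses (Hs : uniq s) (Hall : forall x, x \in s).
Definition YF : Type := Y.
HB.instance Definition _ := Group.on YF.
Definition YF_pick (x : YF) : nat := index x s.
Definition YF_unpick (n : nat) : option YF := if n < size s then Some (nth 1 s n) else None.
Lemma YF_pickK : pcancel YF_pick YF_unpick.
Proof. by move=> x; rewrite /YF_pick /YF_unpick index_mem Hall nth_index. Qed.
HB.instance Definition _ := PCanIsCountable YF_pickK.
Lemma YF_fin : Finite.axiom (s : seq YF).
Proof. by move=> x; rewrite count_uniq_mem // Hall. Qed.
HB.instance Definition _ := isFinite.Build YF YF_fin.
Lemma YF_exp (y : Y) : y ^+ size s = 1.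
Proof.
have -> : size s = #|[set: YF]|.
  have Hs' : @uniq YF s := Hs.
  rewrite cardsT -(card_uniqP Hs'); apply: eq_card => x; by rewrite Hall.
exact: (@expg_cardG _ [set: YF] (y : YF) (in_setT _)).
Qed.
End Fin.
Require Import Defs.
From Stdlib Require Import Classical.

Lemma alpha1 (G Y : groupType) (alpha : G -> Y) :
  (forall x y, alpha (x * y) = alpha x * alpha y) -> alpha 1 = 1.
Proof. move=> h; apply: (@mulgI _ (alpha 1)); by rewrite -h !mulg1. Qed.

Lemma alphaV (G Y : groupType) (alpha : G -> Y) :
  (forall x y, alpha (x * y) = alpha x * alpha y) -> forall x, alpha x^-1 = (alpha x)^-1.
Proof.
move=> h x; apply: (@mulgI _ (alpha x)); by rewrite -h !mulgV alpha1.
Qed.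

Lemma iter_cg (Y : groupType) (y z : Y) n : iter n (cg y) z = (y ^+ n)^-1 * z * y ^+ n.
Proof.
elim: n => [|n IH]; first by rewrite /= invg1 mul1g mulg1.
by rewrite iterS IH /cg expgSr invMg !mulgA.
Qed.

Lemma iter_mul (G : groupType) (P : G -> Prop) (f : G -> G) n q :
  (forall x, P x -> iter n f x = x) -> forall x, P x -> iter (q * n) f x = x.
Proof.
move=> h x Px; elim: q => [|q IH] //.
by rewrite mulSn iterD IH h.
Qed.

Lemma min_period (G : groupType) (P : G -> Prop) (f : G -> G) n :
  (0 < n)%N -> (forall x, P x -> iter n f x = x) ->
  exists n0, [/\ (0 < n0)%N, (n0 <= n)%N, (forall x, P x -> iter n0 f x = x) &
    forall m, (0 < m < n0)%N -> exists x, P x /\ iter m f x <> x].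
Proof.
move=> n0 hp.
suff: forall N n, (n <= N)%N -> (0 < n)%N -> (forall x, P x -> iter n f x = x) ->
  exists n0, [/\ (0 < n0)%N, (n0 <= n)%N, (forall x, P x -> iter n0 f x = x) &
    forall m, (0 < m < n0)%N -> exists x, P x /\ iter m f x <> x].
  by move=> h; apply: (h n).
clear n n0 hp; elim=> [|N IH] n hn n0 hp; first by case: n hn n0 hp.
case: (classic (exists m, (0 < m < n)%N /\ forall x, P x -> iter m f x = x)).
  move=> [m [/andP [m0 mn] hm]].
  have [n1 [h1 h2 h3 h4]] := IH m (leq_trans mn hn) m0 hm.
  by exists n1; split=> //; apply: leq_trans h2 (ltnW mn).
move=> hno; exists n; split=> // m hm.
apply: NNPP => hne; apply: hno; exists m; split=> // x Px.
by apply: NNPP => hx; apply: hne; exists x.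
Qed.

Theorem lemma3p1 (G Y : groupType) (A B : G -> Prop) (phi : G -> G)
    (y : Y) (alpha : G -> Y) :
  HNN_pair A B phi ->
  HNN_embedding A B phi (fun _ => True) (fun _ => True) (cg y) alpha ->
  (forall p : nat, prime p -> finite_ppower_order Y p ->
     exists k : nat, order_on (HNN_core A B phi) phi (p ^ k)%N) /\
  (forall a b : G, A a -> B b ->
     HNN_embedding A B (fun x => cg b (phi (cg a x)))
       (fun _ => True) (fun _ => True) (cg (alpha a * y * alpha b)) alpha).
Proof.
move=> [[A1 [AM AV]] [[B1 [BM BV]] [iAB _]]] [[hm [_ [_ hc]]] inj].
split.
  move=> p pp [s [us [alls [m sz]]]].
  have ey : y ^+ (p ^ m) = 1 by rewrite -sz YF_exp.
  set H := HNN_core A B phi.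
  have HA x : H x -> A x by move=> h; case: (h 0%N).
  have Hphi x : H x -> H (phi x) by move=> h k; case: (h k.+1) => [[_ ?] _].
  have Hit n x : H x -> H (iter n phi x).
    by move=> hx; elim: n => //= n IH; apply: Hphi.
  have Hal n x : H x -> alpha (iter n phi x) = iter n (cg y) (alpha x).
    move=> hx; elim: n => //= n IH; by rewrite -IH hc //; apply: HA; apply: Hit.
  have per : forall x, H x -> iter (p ^ m) phi x = x.
    move=> x hx; apply: inj; by rewrite Hal // iter_cg ey invg1 mul1g mulg1.
  have pm0 : (0 < p ^ m)%N by rewrite expn_gt0 prime_gt0.
  have [n0 [n00 _ hn0 hmin]] := @min_period _ H phi _ pm0 per.
  have dv : (n0 %| p ^ m)%N.
    rewrite /dvdn; apply/eqP; apply: NNPP => hr.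
    have r0 : (0 < p ^ m %% n0)%N by rewrite lt0n; apply/eqP.
    have [x [Hx hx]] := hmin _ (andb_true_intro (conj r0 (ltn_pmod _ n00))).
    apply: hx; rewrite -{2}(per x Hx) {2}(divn_eq (p ^ m) n0) addnC iterD.
    by rewrite (@iter_mul _ H phi n0 _ hn0).
  have /(dvdn_pfactor _ _ pp) [k _ ek] := dv.
  by exists k; rewrite -ek; split.
move=> a b Aa Bb; split=> //; split=> //; split=> //; split=> // x Ax.
have Aca : A (cg a x).
  rewrite /cg; apply: (AM); last exact: Aa.
  apply: (AM); last exact: Ax.
  exact: AV.
by rewrite /cg !hm -hc // /cg !hm !alphaV // !invMg !mulgA.
Qed.
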